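(* Let $a,b$ be coprime integers with $0<a\le b$ and let $a/b=[0,u_1,\dots,u_n]$ be a simple continued fraction expansion of odd depth $n=2i+1$ ($i\ge 0$), with convergents $p_k/q_k$. Let $D$ be the standard line $\{(x,y)\in\mathbb{Z}^2: 0\le ax-by<a+b\}$, let $U_1=(0,0)$ and $U_2=(b,a)$ (consecutive upper leaning points of $D$), let $L_1$ be the lower leaning point of $D$ with $0<x\le b$, and $L_2=L_1+(b,a)$. Then \[ \overrightarrow{U_1L_1}=(u_{2i+1}-1)(q_{2i},p_{2i})+(q_{2i-1},p_{2i-1})+(1,-1),\qquad \overrightarrow{L_1U_2}=(q_{2i}-1,\;p_{2i}+1). \] Moreover, the Freeman word of the DSS $[U_1L_1]$ has $E(z_{2i})^{u_{2i+1}-1}$ as a left factor (prefix), and the Freeman word of the DSS $[L_1U_2]$ has $E(z_{2i-1})^{u_{2i}}$ as a right factor (suffix).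
   Context: A standard line $\{\mu\le ax-by<\mu+|a|+|b|\}$ is a 4-connected path of lattice points; points with $ax-by=\mu$ are upper leaning points, those with $ax-by=\mu+|a|+|b|-1$ lower leaning points. For two points $P,Q$ of $D$, $[PQ]$ denotes the path of points of $D$ from $P$ to $Q$, and its Freeman word records its unit moves, with $0$ denoting the step $(1,0)$ and $1$ the step $(0,1)$. For $a/b=[0,u_1,\dots,u_n]$, the $k$-th convergent is $z_k=p_k/q_k=[0,u_1,\dots,u_k]$, with $(p_0,q_0)=(0,1)$, $(p_{-1},q_{-1})=(1,0)$, $u_0=0$ and $(p_k,q_k)=u_k(p_{k-1},q_{k-1})+(p_{k-2},q_{k-2})$. The words $E(z_k)$ are defined by $E(z_{-1})=1$, $E(z_0)=0$, $E(z_1)=0^{u_1}1$, $E(z_{2j+1})=E(z_{2j})^{u_{2j+1}}E(z_{2j-1})$ and $E(z_{2j})=E(z_{2j-2})E(z_{2j-1})^{u_{2j}}$; $E(z_n)$ is the pattern of slope $a/b$ (the Freeman word between consecutive upper leaning points). *)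

(* Defs.v *)
From mathcomp Require Import all_boot all_order all_algebra.
Set Implicit Arguments. Unset Strict Implicit. Unset Printing Implicit Defensive.
Import Order.TTheory GRing.Theory Num.Theory.
Local Open Scope ring_scope.

Definition pt := (int * int)%type.

Definition inD (a b : nat) (P : pt) : bool :=
  (0 <= a%:Z * P.1 - b%:Z * P.2) && (a%:Z * P.1 - b%:Z * P.2 < a%:Z + b%:Z).

(** Freeman letters: 0 = step (1,0), 1 = step (0,1).
    fword a b P n : the word of the n unit moves of the 4-connected path D
    starting at P (the next point of D is P+(1,0) if it lies in D, else P+(0,1)). *)
Fixpoint fword (a b : nat) (P : pt) (n : nat) : seq nat :=
  match n with
  | 0 => [::]
  | n'.+1 =>
      if inD a b (P.1 + 1, P.2) then 0%N :: fword a b (P.1 + 1, P.2) n'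
      else 1%N :: fword a b (P.1, P.2 + 1) n'
  end.

Definition freeman (a b : nat) (P Q : pt) : seq nat :=
  fword a b P (absz ((Q.1 + Q.2) - (P.1 + P.2))%R).

Fixpoint cfv (x0 : nat) (l : seq nat) : rat :=
  match l with
  | [::] => x0%:R
  | x1 :: l' => x0%:R + (cfv x1 l')^-1
  end.

(** Partial quotients u_k of [0, u_1, ..., u_n] given as us = [u_1; ...; u_n],
    with the convention u_0 = 0. *)
Definition ucoef (us : seq nat) (k : nat) : nat :=
  if k is k'.+1 then nth 0%N us k' else 0%N.

(** cpair us k = ((p_{k-1}, q_{k-1}), (p_k, q_k)), with
    (p_{-1},q_{-1}) = (1,0), (p_0,q_0) = (0,1),
    (p_k,q_k) = u_k (p_{k-1},q_{k-1}) + (p_{k-2},q_{k-2}). *)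
Fixpoint cpair (us : seq nat) (k : nat) : (nat * nat) * (nat * nat) :=
  match k with
  | 0 => ((1%N, 0%N), (0%N, 1%N))
  | k'.+1 =>
      let: (pr, cu) := cpair us k' in
      (cu, (ucoef us k * cu.1 + pr.1, ucoef us k * cu.2 + pr.2)%N)
  end.

Definition pconv (us : seq nat) (k : nat) : nat := (cpair us k).2.1.
Definition qconv (us : seq nat) (k : nat) : nat := (cpair us k).2.2.
Definition pconv_prev (us : seq nat) (k : nat) : nat := (cpair us k).1.1.
Definition qconv_prev (us : seq nat) (k : nat) : nat := (cpair us k).1.2.

Definition wpow (w : seq nat) (m : nat) : seq nat := flatten (nseq m w).

(** Epair us k = (E(z_{k-1}), E(z_k)) with E(z_{-1}) = 1, E(z_0) = 0,
    E(z_{2j+1}) = E(z_{2j})^{u_{2j+1}} E(z_{2j-1}),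
    E(z_{2j})   = E(z_{2j-2}) E(z_{2j-1})^{u_{2j}}   (j >= 1);
    E(z_1) = 0^{u_1} 1 is the case j = 0 of the odd rule. *)
Fixpoint Epair (us : seq nat) (k : nat) : seq nat * seq nat :=
  match k with
  | 0 => ([:: 1%N], [:: 0%N])
  | k'.+1 =>
      let: (Em, Ek) := Epair us k' in
      if odd k then (Ek, wpow Ek (ucoef us k) ++ Em)
      else (Ek, Em ++ wpow Ek (ucoef us k))
  end.

Definition Ez (us : seq nat) (k : nat) : seq nat := (Epair us k).2.
Definition Ez_prev (us : seq nat) (k : nat) : seq nat := (Epair us k).1.

(* Main.v *)
Require Import Defs.
From mathcomp Require Import all_boot all_order all_algebra.
From mathcomp Require Import zify ring lra.
Import Order.TTheory GRing.Theory Num.Theory.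
Local Open Scope ring_scope.



Fixpoint fw (a b : nat) (r : int) (n : nat) : seq nat :=
  match n with
  | 0 => [::]
  | n'.+1 =>
    if (0 <= r + a%:Z) && (r + a%:Z < a%:Z + b%:Z) then 0%N :: fw a b (r + a%:Z) n'
    else 1%N :: fw a b (r - b%:Z) n'
  end.

Fixpoint fpos (a b : nat) (r : int) (n : nat) : int :=
  match n with
  | 0 => r
  | n'.+1 =>
    if (0 <= r + a%:Z) && (r + a%:Z < a%:Z + b%:Z) then fpos a b (r + a%:Z) n'
    else fpos a b (r - b%:Z) n'
  end.

Lemma fword_fw a b P n : fword a b P n = fw a b (a%:Z * P.1 - b%:Z * P.2) n.
Proof.
elim: n P => [|n IH] [x y] //=.
have e1 : a%:Z * (x + 1) - b%:Z * y = (a%:Z * x - b%:Z * y) + a%:Z by ring.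
have e2 : a%:Z * x - b%:Z * (y + 1) = (a%:Z * x - b%:Z * y) - b%:Z by ring.
by rewrite /inD /= !IH /= e1 e2.
Qed.

Lemma fw_cat a b r m k : fw a b r (m + k) = fw a b r m ++ fw a b (fpos a b r m) k.
Proof.
elim: m r => [|m IH] r //=.
by case: ifP => _; rewrite IH.
Qed.

Lemma fpos_cat a b r m k : fpos a b r (m + k) = fpos a b (fpos a b r m) k.
Proof.
elim: m r => [|m IH] r //=.
by case: ifP => _; rewrite IH.
Qed.

Lemma size_fw a b r n : size (fw a b r n) = n.
Proof. elim: n r => [|n IH] r //=; by case: ifP => _; rewrite /= IH. Qed.

Lemma fpos_range a b r n : (0 < b)%N -> 0 <= r < a%:Z + b%:Z ->
  0 <= fpos a b r n < a%:Z + b%:Z /\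
  exists t : int, fpos a b r n = r + a%:Z * n%:Z - (a%:Z + b%:Z) * t.
Proof.
move=> hb; elim: n r => [|n IH] r hr /=.
  by split => //; exists 0; lia.
case: ifP => /andP.
  move=> [h1 h2]; have [h3 [t ht]] := IH (r + a%:Z) (ltac:(apply/andP; split => //)).
  split => //; exists t; rewrite ht; lia.
move=> hn.
have hr' : 0 <= r - b%:Z < a%:Z + b%:Z.
  case/andP: hr => h1 h2; apply/andP; split; last by lia.
  have : ~ (0 <= r + a%:Z /\ r + a%:Z < a%:Z + b%:Z) by move=> [u v]; apply: hn; split.
  lia.
have [h3 [t ht]] := IH _ hr'.
split => //; exists (t + 1); rewrite ht; lia.
Qed.

Definition reads a b (w : seq nat) (r d : int) :=
  fw a b r (size w) = w /\ fpos a b r (size w) = r + d.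

Lemma reads_cat a b u v r d1 d2 :
  reads a b u r d1 -> reads a b v (r + d1) d2 -> reads a b (u ++ v) r (d1 + d2).
Proof.
move=> [h1 h2] [h3 h4]; split; rewrite size_cat.
  by rewrite fw_cat h1 h2 h3.
by rewrite fpos_cat h2 h4 addrA.
Qed.

Lemma wpowS w m : wpow w m.+1 = w ++ wpow w m.
Proof. by []. Qed.

Lemma size_wpow w m : size (wpow w m) = (m * size w)%N.
Proof. elim: m => [|m IH] //; by rewrite wpowS size_cat IH mulSn. Qed.

Lemma reads_pow a b w m r d :
  (forall t, (t < m)%N -> reads a b w (r + t%:Z * d) d) ->
  reads a b (wpow w m) r (m%:Z * d).
Proof.
elim: m r => [|m IH] r H.
  by split => //=; rewrite mul0r addr0.
rewrite wpowS.
have -> : (m.+1)%:Z * d = d + m%:Z * d by rewrite -addn1 PoszD mulrDl mul1r addrC.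
apply: reads_cat.
  by have := H 0%N erefl; rewrite mul0r addr0.
apply: IH => t ht.
have := H t.+1 ht.
by rewrite -addn1 PoszD mulrDl mul1r (addrC (t%:Z * d)) addrA.
Qed.



Fixpoint ep (a b : nat) (us : seq nat) (k : nat) : nat * nat :=
  match k with
  | 0 => (b, a)
  | k'.+1 => let e := ep a b us k' in (e.2, e.1 - ucoef us k * e.2)%N
  end.

Lemma cpair_S us k : cpair us k.+1 =
  ((cpair us k).2, (ucoef us k.+1 * (cpair us k).2.1 + (cpair us k).1.1,
                    ucoef us k.+1 * (cpair us k).2.2 + (cpair us k).1.2)%N).
Proof. by rewrite /=; case: (cpair us k) => [[? ?] [? ?]]. Qed.

Lemma Epair_S us k : Epair us k.+1 =
  if odd k.+1 then ((Epair us k).2, wpow (Epair us k).2 (ucoef us k.+1) ++ (Epair us k).1)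
  else ((Epair us k).2, (Epair us k).1 ++ wpow (Epair us k).2 (ucoef us k.+1)).
Proof. by rewrite /=; case: (Epair us k). Qed.

Lemma Epair_S1 us k : (Epair us k.+1).1 = (Epair us k).2.
Proof. by rewrite Epair_S; case: ifP. Qed.

Lemma size_Epair us k :
  size (Epair us k).2 = (pconv us k + qconv us k)%N /\
  size (Epair us k).1 = (pconv_prev us k + qconv_prev us k)%N.
Proof.
rewrite /pconv /qconv /pconv_prev /qconv_prev.
elim: k => [|k [IH1 IH2]] //.
rewrite Epair_S cpair_S /=.
case: ifP => _ /=; rewrite size_cat size_wpow IH1 IH2; split => //; lia.
Qed.

Lemma cfv_ge0 x0 l : 0 <= cfv x0 l.
Proof.
elim: l x0 => [|x1 l IH] x0 /=; first exact: ler0n.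
by rewrite addr_ge0 ?ler0n // invr_ge0.
Qed.

Lemma cfv_split x0 l : cfv x0 l = x0%:R + cfv 0 l.
Proof. by case: l => [|x1 l] /=; rewrite ?addr0 ?add0r. Qed.

Lemma step_facts (x y u : nat) rest : (0 < x)%N -> (0 < u)%N ->
  (y%:R : rat) = x%:R * cfv 0 (u :: rest) ->
  [/\ (u * y <= x)%N, (0 < y)%N & ((x - u * y)%N%:R : rat) = y%:R * cfv 0 rest].
Proof.
move=> hx hu hy.
set c := cfv u rest.
have hc1 : 1 <= c.
  rewrite /c cfv_split -[1]addr0 lerD ?cfv_ge0 //.
  by rewrite ler1n.
have hc0 : c != 0 by apply/negP => /eqP h; move: hc1; rewrite h ler10.
have hy' : (y%:R : rat) = x%:R / c by rewrite hy /= add0r.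
have hxc : (x%:R : rat) = y%:R * c by rewrite hy' divfK.
have ypos : (0 < y)%N.
  by rewrite -(ltr0n rat) hy' divr_gt0 // ?ltr0n // (lt_le_trans ltr01 hc1).
have hle : (u * y <= x)%N.
  rewrite -(ler_nat rat) natrM hxc mulrC ler_wpM2l ?ler0n //.
  by rewrite /c cfv_split lerDl cfv_ge0.
split => //.
rewrite natrB // natrM hxc /c cfv_split; ring.
Qed.



Lemma upos us k : all (fun x => 0 < x)%N us -> (k < size us)%N -> (0 < ucoef us k.+1)%N.
Proof. by move=> /allP H hk; apply: H; rewrite mem_nth. Qed.

Lemma epQ a b us : (0 < b)%N -> all (fun x => 0 < x)%N us ->
  (a%:R / b%:R : rat) = cfv 0 us ->
  forall k, (k <= size us)%N ->
  ((ep a b us k).2%:R : rat) = (ep a b us k).1%:R * cfv 0 (drop k us) /\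
  (0 < (ep a b us k).1)%N.
Proof.
move=> hb hus hcf; elim => [|k IH] hk.
  rewrite drop0 /= -hcf mulrC divfK //; by rewrite pnatr_eq0 -lt0n.
have hk' : (k < size us)%N by [].
have [h1 h2] := IH (ltnW hk).
rewrite (drop_nth 0 hk') in h1.
have := step_facts _ _ _ _ h2 (upos _ _ hus hk') h1.
case => hle hy heq.
by rewrite /= heq.
Qed.

Lemma eple a b us k : (0 < b)%N -> all (fun x => 0 < x)%N us ->
  (a%:R / b%:R : rat) = cfv 0 us -> (k < size us)%N ->
  (ucoef us k.+1 * (ep a b us k).2 <= (ep a b us k).1)%N.
Proof.
move=> hb hus hcf hk.
have [h1 h2] := epQ _ _ _ hb hus hcf _ (ltnW hk).
rewrite (drop_nth 0 hk) in h1.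
by have [] := step_facts _ _ _ _ h2 (upos _ _ hus hk) h1.
Qed.

Lemma ep_gcd a b us k :
  (forall j, (j < k)%N -> (ucoef us j.+1 * (ep a b us j).2 <= (ep a b us j).1)%N) ->
  gcdn (ep a b us k).1 (ep a b us k).2 = gcdn b a.
Proof.
elim: k => [|k IH] H //=.
rewrite -IH; last by move=> j hj; apply: H; apply: ltnW.
have := H k (ltnSn k).
set x := (ep a b us k).1; set y := (ep a b us k).2; set u := ucoef us k.+1.
move=> hle.
have e : gcdn y x = gcdn y (u * y + (x - u * y)) by rewrite subnKC.
by rewrite [RHS]gcdnC e gcdnMDl.
Qed.

Lemma ep_pq a b us k :
  (forall j, (j < k)%N -> (ucoef us j.+1 * (ep a b us j).2 <= (ep a b us j).1)%N) ->
  a%:Z * (qconv us k)%:Z - b%:Z * (pconv us k)%:Z = (-1) ^+ k * (ep a b us k).2%:Z /\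
  a%:Z * (qconv_prev us k)%:Z - b%:Z * (pconv_prev us k)%:Z = - ((-1) ^+ k * (ep a b us k).1%:Z).
Proof.
rewrite /qconv /pconv /qconv_prev /pconv_prev.
elim: k => [|k IH] H.
  by rewrite /= expr0 !mul1r; split; lia.
have [IH1 IH2] := IH (fun j hj => H j (ltnW hj)).
have hle := H k (ltnSn k).
move: IH1 IH2 hle.
rewrite cpair_S /=.
set x := (ep a b us k).1; set y := (ep a b us k).2; set u := ucoef us k.+1.
set p := (cpair us k).2.1; set q := (cpair us k).2.2.
set p' := (cpair us k).1.1; set q' := (cpair us k).1.2.
move=> IH1 IH2 hle.
have hsub : ((x - u * y)%N : int) = x%:Z - u%:Z * y%:Z by rewrite subzn // PoszM.
rewrite hsub exprS.
split; last by rewrite IH1; ring.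
have -> : a%:Z * (u * q + q')%N%:Z - b%:Z * (u * p + p')%N%:Z =
  u%:Z * (a%:Z * q%:Z - b%:Z * p%:Z) + (a%:Z * q'%:Z - b%:Z * p'%:Z).
  rewrite !PoszD !PoszM; ring.
rewrite IH1 IH2; ring.
Qed.

Lemma det_pq us k :
  (pconv_prev us k)%:Z * (qconv us k)%:Z - (pconv us k)%:Z * (qconv_prev us k)%:Z = (-1) ^+ k.
Proof.
rewrite /qconv /pconv /qconv_prev /pconv_prev.
elim: k => [|k IH]; first by rewrite /= expr0.
rewrite cpair_S /= exprS -IH !PoszD !PoszM; ring.
Qed.

Lemma q_mono us k : all (fun x => 0 < x)%N us -> (k <= size us)%N ->
  (1 <= qconv us k)%N /\ (qconv_prev us k <= qconv us k)%N.
Proof.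
rewrite /qconv /qconv_prev => hus.
elim: k => [|k IH] hk //.
have [h1 h2] := IH (ltnW hk).
have hu := upos _ _ hus hk.
rewrite cpair_S /=.
have hq := leq_trans (leq_pmull (cpair us k).2.2 hu) (leq_addr (cpair us k).1.2 _).
split => //; exact: leq_trans h1 hq.
Qed.



Definition Inv a b us k :=
  let E := Epair us k in let e := ep a b us k in
  if odd k then
   (forall r : int, e.2%:Z <= r < e.2%:Z + e.1%:Z -> reads a b E.2 r (- e.2%:Z)) /\
   (forall r : int, 0 <= r < e.2%:Z + e.1%:Z -> reads a b E.1 r e.1%:Z)
  else
   (forall r : int, 0 <= r < e.1%:Z -> reads a b E.2 r e.2%:Z) /\
   (forall r : int, e.1%:Z <= r < e.1%:Z + e.2%:Z -> reads a b E.1 r (- e.1%:Z)).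

Lemma inv_main a b us k :
  (forall j, (j < k)%N -> (0 < ucoef us j.+1)%N &&
     (ucoef us j.+1 * (ep a b us j).2 <= (ep a b us j).1)%N) ->
  Inv a b us k.
Proof.
elim: k => [|k IH] H.
  rewrite /Inv /=; split => r hr; split => //=.
  - by have -> : (0 <= r + a%:Z) && (r + a%:Z < a%:Z + b%:Z) by apply/andP; split; lia.
  - by have -> : (0 <= r + a%:Z) && (r + a%:Z < a%:Z + b%:Z) by apply/andP; split; lia.
  - by have -> : (0 <= r + a%:Z) && (r + a%:Z < a%:Z + b%:Z) = false by apply/negbTE/negP => /andP; lia.
  - by have -> : (0 <= r + a%:Z) && (r + a%:Z < a%:Z + b%:Z) = false by apply/negbTE/negP => /andP; lia.
have := IH (fun j hj => H j (ltnW hj)).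
have /andP [hu hle] := H k (ltnSn k).
rewrite /Inv Epair_S /=.
move: hu hle.
set x := (ep a b us k).1; set y := (ep a b us k).2; set u := ucoef us k.+1.
set Em := (Epair us k).1; set Ek := (Epair us k).2.
move=> hu hle.
have hsub : ((x - u * y)%N : int) = x%:Z - u%:Z * y%:Z by rewrite subzn // PoszM.
rewrite hsub.
have hu' : 1 <= u%:Z by lia.
change (nth 0%N us k) with u.
case: (odd k) => /= -[IHe IHm].
- split => r hr.
  + have -> : x%:Z - u%:Z * y%:Z = x%:Z + u%:Z * (- y%:Z) by ring.
    apply: reads_cat; first by apply: IHm; lia.
    apply: reads_pow => t ht; apply: IHe.
    have ht' : (t%:Z + 1 <= u%:Z) by lia.
    nia.
  + apply: IHe. nia.
- split => r hr.
  + have -> : - (x%:Z - u%:Z * y%:Z) = u%:Z * y%:Z + - x%:Z by ring.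
    apply: reads_cat.
      apply: reads_pow => t ht; apply: IHe.
      have ht' : (t%:Z + 1 <= u%:Z) by lia.
      nia.
    apply: IHm. nia.
  + apply: IHe. nia.
Qed.

Lemma ep_le a b us k : (a <= b)%N -> ((ep a b us k).1 <= b)%N /\ ((ep a b us k).2 <= b)%N.
Proof.
move=> hab; elim: k => [|k [h1 h2]] //=.
split => //; exact: leq_trans (leq_subr _ _) h1.
Qed.

Lemma zero_mul (c z : int) : 0 < c -> - c < c * z -> c * z < c -> z = 0.
Proof. move=> hc h1 h2; nia. Qed.

Lemma uniq_L (a b l1 l2 p q : int) : 0 < b -> 1 <= q <= b -> 0 < l1 <= b ->
  a * q - b * p = 1 -> a * l1 - b * l2 = a + b - 1 ->
  l1 = b - q + 1 /\ l2 = a - p - 1.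
Proof.
move=> hb hq hl pq hL.
have key : a * (l1 - (b - q + 1)) = b * (l2 - (a - p - 1)) by lia.
have hd : l1 - (b - q + 1) = b * (q * (l2 - (a - p - 1)) - p * (l1 - (b - q + 1))).
  transitivity ((l1 - (b - q + 1)) * (a * q - b * p)); first by rewrite pq mulr1.
  have -> : (l1 - (b - q + 1)) * (a * q - b * p) =
    q * (a * (l1 - (b - q + 1))) - b * (p * (l1 - (b - q + 1))) by ring.
  rewrite key; ring.
set z := (q * (l2 - (a - p - 1)) - p * (l1 - (b - q + 1))) in hd.
have h1 : - b < b * z by rewrite -hd; lia.
have h2 : b * z < b by rewrite -hd; lia.
have hz := zero_mul b z hb h1 h2.
rewrite hz mulr0 in hd.
have e1 : l1 = b - q + 1 by lia.
split => //.
rewrite e1 subrr mulr0 in key.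
have : b * (l2 - (a - p - 1)) = 0 by rewrite -key.
move/eqP; rewrite mulf_eq0 => /orP [/eqP hb0|/eqP h]; first by lia.
lia.
Qed.

Lemma rho_eq (a b P0 Q0 x0 w : nat) (rho t : int) : (0 < b)%N ->
  0 <= rho < a%:Z + b%:Z ->
  rho = a%:Z + b%:Z - 1 + a%:Z * (P0 + Q0)%N%:Z - (a%:Z + b%:Z) * t ->
  a%:Z * Q0%:Z - b%:Z * P0%:Z = x0%:Z -> x0 = (w + 1)%N -> (x0 <= b)%N -> rho = w%:Z.
Proof.
move=> hb hr ht hpq hx hxb.
have hz : (a%:Z + b%:Z) * (1 + P0%:Z - t) = rho - w%:Z.
  rewrite ht; move: hpq; rewrite hx PoszD => hpq; rewrite PoszD; lia.
have hw : (w < b)%N by move: hxb; rewrite hx addn1.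
have h0 := zero_mul (a%:Z + b%:Z) (1 + P0%:Z - t) (ltac:(lia)) (ltac:(rewrite hz; lia)) (ltac:(rewrite hz; lia)).
move: hz; rewrite h0 mulr0; lia.
Qed.

Lemma bnd (u t y x : int) : 0 <= y -> 0 <= t -> t + 1 <= u -> x = u * y + 1 ->
  y <= u * y + t * (- y) < y + x.
Proof. move=> *; apply/andP; split; nia. Qed.



Theorem proposition1 (a b : nat) (us : seq nat) (i : nat) (L1 : int * int) :
  (0 < a)%N -> (a <= b)%N -> coprime a b ->
  all (fun x => 0 < x)%N us -> size us = (2 * i + 1)%N ->
  (a%:R / b%:R : rat) = cfv 0 us ->
  a%:Z * L1.1 - b%:Z * L1.2 = a%:Z + b%:Z - 1 -> 0 < L1.1 <= b%:Z ->
  let U1 : int * int := (0, 0) in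
  let U2 : int * int := (b%:Z, a%:Z) in
  let u := ucoef us in
  [/\ ((L1.1 - U1.1, L1.2 - U1.2) =
        (((u (2 * i + 1)%N)%:Z - 1) * (qconv us (2 * i))%:Z
          + (qconv_prev us (2 * i))%:Z + 1,
         ((u (2 * i + 1)%N)%:Z - 1) * (pconv us (2 * i))%:Z
          + (pconv_prev us (2 * i))%:Z - 1)),
      ((U2.1 - L1.1, U2.2 - L1.2) =
        ((qconv us (2 * i))%:Z - 1, (pconv us (2 * i))%:Z + 1)),
      prefix (wpow (Ez us (2 * i)) (u (2 * i + 1)%N).-1) (freeman a b U1 L1)
    & suffix (wpow (Ez_prev us (2 * i)) (u (2 * i)%N)) (freeman a b L1 U2)].
Proof.
move=> ha hab hcop hus hn hcf hL1 hl1 U1 U2 u.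
have hb : (0 < b)%N by apply: leq_trans ha hab.
set n := (2 * i + 1)%N.
have hn' : n = (2 * i).+1 by rewrite /n addn1.
have Hle : forall j, (j < n)%N -> (0 < ucoef us j.+1)%N &&
     (ucoef us j.+1 * (ep a b us j).2 <= (ep a b us j).1)%N.
  move=> j hj; have hj' : (j < size us)%N by rewrite hn.
  by rewrite (upos _ _ hus hj') (eple _ _ _ _ hb hus hcf hj').
have Hle' : forall j, (j < n)%N -> (ucoef us j.+1 * (ep a b us j).2 <= (ep a b us j).1)%N.
  by move=> j hj; case/andP: (Hle j hj).
have hns : (n <= size us)%N by rewrite hn.
have [hyn _] := epQ _ _ _ hb hus hcf n hns.
have hdrop : drop n us = [::] by rewrite drop_oversize // hn.
rewrite hdrop /= mulr0n mulr0 in hyn.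
have hy0 : (ep a b us n).2 = 0%N by apply/eqP; rewrite -(eqr_nat rat) hyn.
have hg := ep_gcd a b us n Hle'.
rewrite hy0 gcdn0 gcdnC (eqP hcop) in hg.
have hepn : ep a b us n = ((ep a b us (2*i)).2,
   (ep a b us (2*i)).1 - ucoef us n * (ep a b us (2*i)).2)%N by rewrite hn'.
rewrite hepn /= in hg hy0.
have h2i : (2 * i < n)%N by rewrite hn'.
have hun := Hle' (2 * i)%N h2i.
rewrite -hn' hg muln1 in hy0 hun.
have hx2i : (ep a b us (2*i)).1 = ucoef us n by apply/eqP; rewrite eqn_leq hun -subn_eq0 hy0.
have [pq2i _] := ep_pq a b us (2*i) (fun j hj => Hle' j (ltn_trans hj h2i)).
rewrite hg exprM sqrrN !expr1n mul1r in pq2i.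
have [pqn _] := ep_pq a b us n Hle'.
rewrite hepn /= hg muln1 hy0 mulr0 in pqn.
have hdet := det_pq us n.
have hodd : ((-1) ^+ n : int) = -1 by rewrite hn' exprS exprM sqrrN !expr1n mulr1.
rewrite hodd in hdet.
set un := ucoef us n.
set p := pconv us (2*i); set q := qconv us (2*i).
set p' := pconv_prev us (2*i); set q' := qconv_prev us (2*i).
have hpn : pconv us n = (un * p + p')%N by rewrite /pconv /p /p' /un hn' cpair_S.
have hqn : qconv us n = (un * q + q')%N by rewrite /qconv /q /q' /un hn' cpair_S.
have hppn : pconv_prev us n = p by rewrite /pconv_prev /p hn' cpair_S.
have hqpn : qconv_prev us n = q by rewrite /qconv_prev /q hn' cpair_S.
rewrite hppn hqpn in hdet.
have haP : a%:Z = (pconv us n)%:Z.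
  transitivity (a%:Z * ((pconv us n)%:Z * q%:Z - p%:Z * (qconv us n)%:Z)).
    have -> : (pconv us n)%:Z * q%:Z - p%:Z * (qconv us n)%:Z = 1 by rewrite -opprB hdet opprK.
    by rewrite mulr1.
  have -> : a%:Z * ((pconv us n)%:Z * q%:Z - p%:Z * (qconv us n)%:Z) =
     (pconv us n)%:Z * (a%:Z * q%:Z - b%:Z * p%:Z) - p%:Z * (a%:Z * (qconv us n)%:Z - b%:Z * (pconv us n)%:Z) by ring.
  by rewrite pq2i pqn; ring.
have hbQ : b%:Z = (qconv us n)%:Z.
  transitivity (b%:Z * ((pconv us n)%:Z * q%:Z - p%:Z * (qconv us n)%:Z)).
    have -> : (pconv us n)%:Z * q%:Z - p%:Z * (qconv us n)%:Z = 1 by rewrite -opprB hdet opprK.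
    by rewrite mulr1.
  have -> : b%:Z * ((pconv us n)%:Z * q%:Z - p%:Z * (qconv us n)%:Z) =
     (qconv us n)%:Z * (a%:Z * q%:Z - b%:Z * p%:Z) - q%:Z * (a%:Z * (qconv us n)%:Z - b%:Z * (pconv us n)%:Z) by ring.
  by rewrite pq2i pqn; ring.
rewrite hpn PoszD PoszM in haP.
rewrite hqn PoszD PoszM in hbQ.
have hunpos : (0 < un)%N.
  have := Hle _ h2i; rewrite -hn' => /andP [h _]; exact: h.
have [hq1 _] := q_mono us (2*i) hus (ltnW (leq_trans h2i hns)).
have hqb : (q <= b)%N.
  have h := leq_trans (leq_pmull q hunpos) (leq_addr q' _).
  by rewrite -(lez_nat) hbQ -PoszM -PoszD lez_nat.
move: hL1 hl1; case: L1 => l1 l2 /= hL1 hl1.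
have hqq : 1 <= q%:Z <= b%:Z by rewrite !lez_nat hq1 hqb.
have [hl1e hl2e] := uniq_L a%:Z b%:Z l1 l2 p%:Z q%:Z (ltac:(by rewrite ltz_nat)) hqq hl1 pq2i hL1.
rewrite /U1 /U2 /u /=.
split.
- rewrite hl1e hl2e haP hbQ; congr (_, _); ring.
- rewrite hl1e hl2e haP hbQ; congr (_, _); ring.
- rewrite /freeman fword_fw /= mulr0 mulr0 subr0.
  have hlen : l1 + l2 - (0 + 0) = Posz ((un.-1) * (p + q) + (p' + q'))%N.
    have hu1 : Posz un.-1 = un%:Z - 1 by rewrite -subn1 subzn.
    rewrite hl1e hl2e haP hbQ !PoszD PoszM hu1; ring.
  rewrite hlen /=.
  have [sz _] := size_Epair us (2*i).
  have hinv := inv_main a b us (2*i) (fun j hj => Hle j (ltn_trans hj h2i)).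
  move: hinv; rewrite /Inv /= oddM /= => -[IHe _].
  rewrite hg hx2i in IHe.
  have R : reads a b (wpow (Ez us (2*i)) un.-1) 0 (un.-1%:Z * 1).
    apply: reads_pow => t ht; apply: IHe.
    rewrite add0r mulr1 lez_nat ltz_nat leq0n /=.
    exact: leq_trans ht (leq_pred _).
  case: R => hfw _.
  have hN : (un.-1 * (p + q) + (p' + q'))%N = (size (wpow (Ez us (2*i)) un.-1) + (p' + q'))%N.
    by rewrite size_wpow /Ez sz.
  by rewrite hN fw_cat hfw prefix_prefix.
- case hi: i => [|j]; first exact: suffix0s.
  set k0 := (2 * j).+1.
  have h2 : (2 * i = k0.+1)%N by rewrite hi /k0 mulnS.
  have hk0n : (k0 < n)%N by rewrite hn' h2 ltnS leqnSn.
  have hk0s : (k0 < size us)%N by rewrite hn.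
  have h2' : (2 * j.+1 = k0.+1)%N by rewrite /k0 mulnS.
  rewrite h2' /Ez_prev Epair_S1.
  set u2 := ucoef us k0.+1.
  set x0 := (ep a b us k0).1; set y0 := (ep a b us k0).2.
  have hinv := inv_main a b us k0 (fun jj hj => Hle jj (ltn_trans hj hk0n)).
  have hok : odd k0 = true by rewrite /k0 /= oddM.
  move: hinv; rewrite /Inv hok => -[IHe _].
  have hx0 : x0 = (u2 * y0 + 1)%N.
    have hle0 := Hle' k0 hk0n.
    move: hg; rewrite h2 /= => hg.
    by rewrite -hg subnKC.
  have hx0b : (x0 <= b)%N by have [] := ep_le a b us k0 hab.
  have [_ pqk0] := ep_pq a b us k0 (fun jj hj => Hle' jj (ltn_trans hj hk0n)).
  have hsgn : ((-1) ^+ k0 : int) = -1 by rewrite /k0 exprS exprM sqrrN !expr1n mulr1.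
  rewrite hsgn mulN1r opprK in pqk0.
  set P0 := pconv_prev us k0; set Q0 := qconv_prev us k0.
  set P1 := pconv us k0; set Q1 := qconv us k0.
  have hp : p = (u2 * P1 + P0)%N by rewrite /p h2 /pconv cpair_S.
  have hq : q = (u2 * Q1 + Q0)%N by rewrite /q h2 /qconv cpair_S.
  have [szk _] := size_Epair us k0.
  rewrite /freeman fword_fw /= hL1.
  have hN : b%:Z + a%:Z - (l1 + l2) = Posz ((P0 + Q0) + size (wpow (Epair us k0).2 u2))%N.
    rewrite size_wpow szk hl1e hl2e hp hq !PoszD !PoszM; ring.
  rewrite hN /= fw_cat.
  have hr0 : 0 <= a%:Z + b%:Z - 1 < a%:Z + b%:Z by lia.
  have [hrng [t ht]] := fpos_range a b (a%:Z + b%:Z - 1) (P0 + Q0) hb hr0.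
  have hrho := rho_eq a b P0 Q0 x0 (u2 * y0) _ t hb hrng ht pqk0 hx0 hx0b.
  rewrite hrho.
  have R : reads a b (wpow (Epair us k0).2 u2) (u2 * y0)%N%:Z (u2%:Z * (- y0%:Z)).
    apply: reads_pow => tt htt; apply: IHe.
    rewrite PoszM.
    apply: bnd; first by [].
    - by [].
    - by rewrite -PoszD lez_nat addn1.
    - by have := congr1 Posz hx0; rewrite PoszD PoszM.
  case: R => hfw _.
  by rewrite hfw suffix_suffix.
Qed.
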